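(* Let $1\le j\le k$ be integers, let $G$ and $H$ be complementary $(j,k)$-bicliques, and let $g(x)$, $h(x)$ be the interesting factors of $P_G(x)$ and $P_H(x)$ respectively. Then $$g(x)=(-1)^j\,h(-x+j+k-1).$$
   Context: All graphs are finite and simple. For integers $1\le j\le k$, a $(j,k)$-biclique is a graph whose vertex set is the disjoint union of a $j$-clique and a $k$-clique, with an arbitrary set of additional edges (bridging edges) each joining a vertex of the $j$-clique to a vertex of the $k$-clique. Two $(j,k)$-bicliques $G,H$ on the same two cliques are complementary if $H$ is obtained from $G$ by replacing every bridging edge by a non-edge and every non-adjacent pair (one vertex in each clique) by an edge, keeping both cliques. $P_G(x)$ is the chromatic polynomial; $(x)_n=x(x-1)\cdots(x-n+1)$. The interesting factor of a $(j,k)$-biclique $G$ is the degree-$j$ polynomial $P_G(x)/(x)_k$. *)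

(* Defs.v *)
From HB Require Import structures.
From mathcomp Require Import all_boot all_order all_algebra.
Set Implicit Arguments. Unset Strict Implicit. Unset Printing Implicit Defensive.
Import Order.TTheory GRing.Theory Num.Theory.
Local Open Scope ring_scope.

(* A simple graph on a finite vertex type V is given by an adjacency relation
   (assumed symmetric and irreflexive where relevant). *)

Definition proper_coloring (V : finType) (e : rel V) (n : nat)
  (f : {ffun V -> 'I_n}) : bool :=
  [forall u, forall v, e u v ==> (f u != f v)].

Definition num_colorings (V : finType) (e : rel V) (n : nat) : nat :=
  #|[set f : {ffun V -> 'I_n} | proper_coloring e f]|.

(* p is the chromatic polynomial of (V, e): p(n) = number of proper
   n-colourings for every natural n (this determines p uniquely). *)
Definition is_chromatic_poly (V : finType) (e : rel V) (p : {poly rat}) : Prop :=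
  forall n : nat, p.[n%:R] = (num_colorings e n)%:R.

(* (j,k)-biclique: vertex set 'I_j + 'I_k, the two sides are cliques, and
   B a b says whether a of the j-clique is joined to b of the k-clique. *)
Definition biclique_rel (j k : nat) (B : 'I_j -> 'I_k -> bool)
  : rel ('I_j + 'I_k) :=
  fun u v =>
    match u, v with
    | inl a, inl a' => a != a'
    | inr b, inr b' => b != b'
    | inl a, inr b => B a b
    | inr b, inl a => B a b
    end.

Definition compl_bridges (j k : nat) (B : 'I_j -> 'I_k -> bool)
  : 'I_j -> 'I_k -> bool := fun a b => ~~ B a b.

Definition falling_poly (n : nat) : {poly rat} :=
  \prod_(i < n) ('X - (i%:R)%:P).

Definition interesting_factor (k : nat) (P : {poly rat}) : {poly rat} :=
  (P %/ falling_poly k)%R.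

(* Main.v *)
Require Import Defs.
From HB Require Import structures.
From mathcomp Require Import all_boot all_order all_algebra.
Set Implicit Arguments. Unset Strict Implicit. Unset Printing Implicit Defensive.

Module P1.
Import GRing.Theory Num.Theory.
Local Open Scope ring_scope.

Definition okc (J K T : finType) (B : J -> K -> bool) (c : K -> T) (f : {ffun J -> T}) :=
  injectiveb f && [forall a, forall b, B a b ==> (f a != c b)].

Definition cntc (J K T : finType) (B : J -> K -> bool) (c : K -> T) : nat :=
  #|[set f : {ffun J -> T} | okc B c f]|.

Lemma eq_cntc (J K T : finType) (B B' : J -> K -> bool) (c : K -> T) :
  (forall a b, B a b = B' a b) -> cntc B c = cntc B' c.
Proof.
move=> E; apply: eq_card => f; rewrite !inE /okc.
congr (_ && _); apply: eq_forallb => a; apply: eq_forallb => b; by rewrite E.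
Qed.

Lemma cntc_false (J K T : finType) (B : J -> K -> bool) (c : K -> T) :
  (forall a b, B a b = false) -> cntc B c = (#|T| ^_ #|J|)%N.
Proof.
move=> E; rewrite -card_inj_ffuns; apply: eq_card => f; rewrite !inE /okc.
suff -> : [forall a, forall b, B a b ==> (f a != c b)] by rewrite andbT.
by apply/forallP => a; apply/forallP => b; rewrite E.
Qed.

Lemma cntc_true (J K T : finType) (B : J -> K -> bool) (c : K -> T) :
  injective c -> (forall a b, B a b = true) -> cntc B c = ((#|T| - #|K|) ^_ #|J|)%N.
Proof.
move=> ic E.
have -> : (#|T| - #|K|)%N = #|~: [set c b | b in K]|.
  by rewrite cardsCs setCK card_imset.
rewrite -card_inj_ffuns_on; apply: eq_card => f; rewrite !inE /okc andbC.
congr (_ && _); apply/forallP/ffun_onP.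
- move=> H a; rewrite inE; apply/imsetP => -[b _ fab].
  by move: (H a) => /forallP /(_ b); rewrite E fab eqxx.
- move=> H a; apply/forallP => b; rewrite E /=; move: (H a); rewrite inE.
  by apply: contra => /eqP ->; apply: imset_f.
Qed.

Lemma poly_eq_nat (p q : {poly rat}) :
  (forall m : nat, p.[m%:R] = q.[m%:R]) -> p = q.
Proof.
move=> E; apply/eqP; rewrite -subr_eq0; apply/eqP.
apply: (@roots_geq_poly_eq0 _ _ [seq i%:R | i <- iota 0 (size (p - q))]).
- apply/allP => x /mapP [i _ ->]; by rewrite /root hornerD hornerN E subrr.
- rewrite map_inj_uniq ?iota_uniq //.
  by move=> x y /eqP; rewrite eqr_nat => /eqP.
- by rewrite size_map size_iota.
Qed.

End P1.
Import P1.

Module P2.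
Import GRing.Theory Num.Theory.

Section Toggle.
Variables (J K T : finType) (B B1 : J -> K -> bool) (c : K -> T) (a0 : J) (b0 : K).
Hypothesis ic : injective c.
Hypothesis B0 : B a0 b0 = false.
Hypothesis EB1 : forall a b, B1 a b = B a b || ((a == a0) && (b == b0)).
Variable c' : {b : K | b != b0} -> {t : T | t != c b0}.
Hypothesis Ec' : forall b, val (c' b) = c (val b).

Definition phi (g : {ffun {a : J | a != a0} -> {t : T | t != c b0}}) : {ffun J -> T} :=
  [ffun a => oapp (fun a' => val (g a')) (c b0) (insub a)].

Lemma phi_val g a' : phi g (val a') = val (g a').
Proof. by rewrite ffunE valK. Qed.

Lemma phi_a0 g : phi g a0 = c b0.
Proof. by rewrite ffunE insubF // eqxx. Qed.

Lemma splitS (X : finType) (x0 x : X) : x = x0 \/ exists x' : {a : X | a != x0}, x = val x'.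
Proof.
have [->|xn] := eqVneq x x0; [by left | right].
by exists (exist _ x xn).
Qed.

Lemma toggle : cntc B c = (cntc B1 c + cntc (fun (a : {a : J | a != a0}) (b : {b : K | b != b0}) => B (val a) (val b)) c')%N.
Proof.
rewrite /cntc.
set S := [set f | okc B c f].
set A2 := [set f : {ffun J -> T} | f a0 == c b0].
rewrite -(cardsID A2 S) addnC; congr (_ + _)%N.
  apply: eq_card => f; rewrite !inE /okc andbCA.
  case: (injectiveb f) => //=; apply/idP/idP.
  - case/andP => H2 H; apply/forallP => a; apply/forallP => b; rewrite EB1.
    case Bab: (B a b) => /=.
      by move/forallP: H => /(_ a) /forallP /(_ b); rewrite Bab.
    by apply/implyP => /andP [/eqP -> /eqP ->].
  - move=> /forallP H; apply/andP; split.
      by move/forallP: (H a0) => /(_ b0); rewrite EB1 !eqxx orbT.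
    apply/forallP => a; apply/forallP => b; apply/implyP => Bab.
    by move/forallP: (H a) => /(_ b); rewrite EB1 Bab.
have phi_inj : injective phi.
  move=> g g' E; apply/ffunP => a'; apply: val_inj.
  by rewrite -!phi_val E.
set D := [set g | okc (fun (a : {a : J | a != a0}) (b : {b : K | b != b0}) => B (val a) (val b)) c' g].
suff E : S :&: A2 = phi @: D by rewrite E card_imset.
apply/setP => f.
rewrite !inE; apply/idP/imsetP; last first.
- case=> g; rewrite inE /okc => /andP [ig og] ->; rewrite phi_a0 eqxx andbT.
  apply/andP; split.
    apply/injectiveP => x y.
    case: (splitS a0 x) => [->|[x' ->]]; case: (splitS a0 y) => [->|[y' ->]] //.
    - rewrite phi_a0 phi_val => E.
      by have := valP (g y'); rewrite -E eqxx.
    - rewrite phi_a0 phi_val => E.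
      by have := valP (g x'); rewrite E eqxx.
    - rewrite !phi_val => /val_inj E; congr val; exact: (injectiveP _ ig).
  apply/forallP => a; apply/forallP => b; apply/implyP => Bab.
  case: (splitS a0 a) Bab => [->|[a' ->]] Bab.
    rewrite phi_a0 (inj_eq ic); apply/negP => /eqP Eb; by rewrite -Eb B0 in Bab.
  rewrite phi_val.
  case: (splitS b0 b) Bab => [->|[b' ->]] Bab.
    exact: (valP (g a')).
  rewrite -Ec' (inj_eq val_inj).
  by move/forallP: og => /(_ a') /forallP /(_ b') /implyP; apply.
- case/andP => /andP [fi fo] /eqP fa0.
  have H : forall a' : {a : J | a != a0}, f (val a') != c b0.
    move=> a'; rewrite -fa0 (inj_eq (injectiveP _ fi)); exact: (valP a').
  exists [ffun a' => Sub (f (val a')) (H a')].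
    rewrite inE /okc; apply/andP; split.
      apply/injectiveP => x y; rewrite !ffunE => /(congr1 val) /= E.
      apply: val_inj; exact: (injectiveP _ fi).
    apply/forallP => a'; apply/forallP => b'; apply/implyP => /= Bab.
    rewrite ffunE -(inj_eq val_inj) /= Ec'.
    by move/forallP: fo => /(_ (val a')) /forallP /(_ (val b')) /implyP; apply.
  apply/ffunP => a; rewrite [RHS]ffunE.
  case: (splitS a0 a) => [->|[a' ->]].
    by rewrite insubF ?eqxx.
  by rewrite valK /= ffunE.
Qed.
End Toggle.

End P2.
Import P2.

Module P3.
Import GRing.Theory Num.Theory.
Local Open Scope ring_scope.

Lemma prod_ffact (t j : nat) : \prod_(i < j) (t%:R - i%:R : rat) = (t ^_ j)%:R.
Proof.
elim: j => [|j IH]; first by rewrite big_ord0.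
rewrite big_ord_recr /= IH ffactnSr natrM.
case: (leqP j t) => [le|gt]; first by rewrite natrB.
by rewrite (ffact_small gt) !mul0r.
Qed.

Lemma refl_id (j k : nat) (y : rat) :
  \prod_(i < j) (y + (k%:R - i%:R)) =
  (-1) ^+ j * \prod_(i < j) (j%:R - k%:R - 1 - y - i%:R).
Proof.
rewrite -[in (-1) ^+ j](card_ord j) -prodrN.
rewrite (reindex_inj rev_ord_inj) /=; apply: eq_bigr => i _.
rewrite /= natrB; last by apply: ltn_ord.
rewrite -addn1 natrD.
rewrite !opprB.
rewrite !addrA; congr (_ - _).
rewrite -(addrA i%:R) (addrC i%:R) -!addrA; congr (_ + _).
by rewrite (addrC 1) addrA (addrC k%:R).
Qed.

Definition reps (J K : finType) (B : J -> K -> bool) (p : {poly rat}) : Prop :=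
  forall (T : finType) (c : K -> T), injective c ->
    (cntc B c)%:R = p.[(#|T| - #|K|)%N%:R].

Lemma reps_uniq (J K : finType) (B : J -> K -> bool) p q :
  reps B p -> reps B q -> p = q.
Proof.
move=> Hp Hq; apply: poly_eq_nat => m.
have ic : injective (@inl K 'I_m) by move=> x y [].
have E1 := Hp _ _ ic; have E2 := Hq _ _ ic.
rewrite card_sum card_ord addKn in E1 E2; by rewrite -E1 -E2.
Qed.

Lemma reps_eq (J K : finType) (B B' : J -> K -> bool) p :
  (forall a b, B a b = B' a b) -> reps B p -> reps B' p.
Proof. by move=> E H T c ic; rewrite -(eq_cntc c E) H. Qed.

Lemma card_sub1 (X : finType) (x0 : X) : #|{: {x : X | x != x0}}| = #|X|.-1.
Proof. by rewrite card_sig -(cardC1 x0); apply: eq_card. Qed.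

Lemma restr_c (K T : finType) (c : K -> T) (ic : injective c) (b0 : K) :
  {c' : {b : K | b != b0} -> {t : T | t != c b0} | forall b, val (c' b) = c (val b)}.
Proof.
have H : forall b : {b : K | b != b0}, c (val b) != c b0.
  by move=> b; rewrite (inj_eq ic); exact: (valP b).
by exists (fun b => exist _ (c (val b)) (H b)).
Qed.

Lemma sub_pred (n m : nat) : (0 < m)%N -> (m <= n)%N -> (n.-1 - m.-1 = n - m)%N.
Proof. by case: m => // m _; case: n => // n _; rewrite subSS. Qed.

Section RepsToggle.
Variables (J K : finType) (B B1 : J -> K -> bool) (a0 : J) (b0 : K).
Hypothesis B0 : B a0 b0 = false.
Hypothesis EB1 : forall a b, B1 a b = B a b || ((a == a0) && (b == b0)).

Lemma toggle_nat (T : finType) (c : K -> T) (ic : injective c) (p2 : {poly rat}) :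
  reps (fun (a : {a : J | a != a0}) (b : {b : K | b != b0}) => B (val a) (val b)) p2 ->
  (cntc B c)%:R = (cntc B1 c)%:R + p2.[(#|T| - #|K|)%N%:R] :> rat.
Proof.
move=> H2; case: (restr_c ic b0) => c' Ec'.
have ic' : injective c'.
  by move=> x y /(congr1 val); rewrite !Ec' => /ic /val_inj.
rewrite (toggle ic B0 EB1 Ec') natrD H2 //.
rewrite !card_sub1 sub_pred //.
- by apply/card_gt0P; exists b0.
- exact: (leq_card _ ic).
Qed.

Lemma reps_toggle1 p1 p2 :
  reps B1 p1 ->
  reps (fun (a : {a : J | a != a0}) (b : {b : K | b != b0}) => B (val a) (val b)) p2 ->
  reps B (p1 + p2).
Proof.
by move=> H1 H2 T c ic; rewrite (toggle_nat ic H2) H1 // hornerD.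
Qed.

Lemma reps_toggle2 p p2 :
  reps B p ->
  reps (fun (a : {a : J | a != a0}) (b : {b : K | b != b0}) => B (val a) (val b)) p2 ->
  reps B1 (p - p2).
Proof.
move=> H H2 T c ic; have := toggle_nat ic H2; rewrite H // hornerD hornerN => ->.
by rewrite addrK.
Qed.
End RepsToggle.

End P3.
Import P3.

Module P4.
Import GRing.Theory Num.Theory.
Local Open Scope ring_scope.

Definition claim (J K : finType) (B : J -> K -> bool) : Prop :=
  forall p q, reps B p -> reps (fun a b => ~~ B a b) q ->
  forall y : rat, p.[y] = (-1) ^+ #|J| * q.[#|J|%:R - #|K|%:R - 1 - y].

Definition RR (J K : finType) (B : J -> K -> bool) : Prop :=
  (exists p, reps B p) /\ claim B.

Lemma shiftS (a b : nat) : (a.+1)%:R - (b.+1)%:R = a%:R - b%:R :> rat.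
Proof. by rewrite !mulrSr (addrC (b%:R) 1) addrKA. Qed.

Lemma base_RR (J K : finType) (B : J -> K -> bool) :
  (forall a b, B a b = false) -> RR B.
Proof.
move=> E.
pose pB : {poly rat} := \prod_(i < #|J|) ('X + (#|K|%:R - i%:R)%:P).
pose qB : {poly rat} := \prod_(i < #|J|) ('X - (i%:R)%:P).
have HpB : reps B pB.
  move=> T c ic; rewrite cntc_false // horner_prod natrB; last exact: (leq_card _ ic).
  rewrite -prod_ffact; apply: eq_bigr => i _.
  by rewrite hornerD hornerX hornerC addrA addrNK.
have HqB : reps (fun a b => ~~ B a b) qB.
  move=> T c ic; rewrite cntc_true //; last by move=> a b; rewrite E.
  rewrite horner_prod -prod_ffact; apply: eq_bigr => i _.
  by rewrite hornerD hornerN hornerX hornerC.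
split; first by exists pB.
move=> p q Hp Hq y.
rewrite (reps_uniq Hp HpB) (reps_uniq Hq HqB) !horner_prod.
rewrite (eq_bigr (fun i : 'I_#|J| => y + (#|K|%:R - i%:R))); last first.
  by move=> i _; rewrite hornerD hornerX hornerC.
rewrite refl_id; congr (_ * _); apply: eq_bigr => i _.
by rewrite hornerD hornerN hornerX hornerC.
Qed.

Lemma step_RR (J K : finType) (B : J -> K -> bool)
  (IHJ : forall (J' K' : finType) (B' : J' -> K' -> bool), (#|J'| < #|J|)%N -> RR B')
  (IHF : forall B' : J -> K -> bool,
     (#|[set x : J * K | B' x.1 x.2]| < #|[set x : J * K | B x.1 x.2]|)%N -> RR B') :
  RR B.
Proof.
case: (set_0Vmem [set x : J * K | B x.1 x.2]) => [F0|[[a0 b0]]].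
  apply: base_RR => a b; apply/negP => Bab.
  by have := in_set0 (a, b); rewrite -F0 inE Bab.
rewrite inE /= => Bab.
pose B0 := fun a b => B a b && ~~ ((a == a0) && (b == b0)).
have B0a0 : B0 a0 b0 = false by rewrite /B0 !eqxx andbF.
have EB : forall a b, B a b = B0 a b || ((a == a0) && (b == b0)).
  move=> a b; rewrite /B0; case: eqP => [->|_]; case: eqP => [->|_];
    by rewrite ?Bab ?andbT ?andbF ?orbF ?orbT.
have ltF : (#|[set x : J * K | B0 x.1 x.2]| < #|[set x : J * K | B x.1 x.2]|)%N.
  rewrite [X in (_ < X)%N](cardsD1 (a0, b0)) inE /= Bab add1n ltnS; apply: subset_leq_card.
  apply/subsetP => -[a b]; rewrite !inE /= /B0 => /andP [-> H].
  by rewrite andbT xpair_eqE.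
have [[p0 Hp0] cl0] := IHF B0 ltF.
have cJ : #|J| = #|{: {a : J | a != a0}}|.+1.
  by rewrite card_sub1 prednK //; apply/card_gt0P; exists a0.
have cK : #|K| = #|{: {b : K | b != b0}}|.+1.
  by rewrite card_sub1 prednK //; apply/card_gt0P; exists b0.
pose B2 := fun (a : {a : J | a != a0}) (b : {b : K | b != b0}) => B (val a) (val b).
have [[p2 Hp2] cl2] : RR B2 by apply: IHJ; rewrite cJ.
have [[q2 Hq2] _] : RR (fun a b => ~~ B2 a b) by apply: IHJ; rewrite cJ.
have E02 : forall a b, B2 a b = B0 (val a) (val b).
  move=> a b; rewrite /B2 /B0.
  by have := valP a; case: eqP => //= _ _; rewrite andbT.
have HpB : reps B (p0 - p2).
  apply: (reps_toggle2 B0a0 EB Hp0); exact: (reps_eq E02 Hp2).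
split; first by exists (p0 - p2).
move=> p q Hp Hq y.
have nB0 : (fun a b => ~~ B a b) a0 b0 = false by rewrite /= Bab.
have EnB : forall a b, ~~ B0 a b = ~~ B a b || ((a == a0) && (b == b0)).
  move=> a b; rewrite /B0; case: eqP => [->|_]; case: eqP => [->|_]; by rewrite ?Bab ?andbT ?andbF ?orbF ?orbT.
have Hq0 : reps (fun a b => ~~ B0 a b) (q - q2).
  apply: (@reps_toggle2 _ _ (fun a b => ~~ B a b) _ a0 b0 nB0 EnB q q2 Hq).
  by apply: (reps_eq _ Hq2).
rewrite (reps_uniq Hp HpB) hornerD hornerN (cl0 _ _ Hp0 Hq0) (cl2 _ _ Hp2 Hq2).
rewrite hornerD hornerN.
move: cJ cK; set j := #|{: {a : J | a != a0}}|; set k := #|{: {b : K | b != b0}}|.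
by move=> -> ->; rewrite shiftS exprS mulN1r mulrBr !mulNr opprK addrK.
Qed.

End P4.
Import P4.

Module P5.
Import GRing.Theory Num.Theory.

Section Col.
Variables (j k n : nat) (B : 'I_j -> 'I_k -> bool).

Definition glue (g : {ffun 'I_k -> 'I_n}) (f : {ffun 'I_j -> 'I_n}) : {ffun ('I_j + 'I_k) -> 'I_n} :=
  [ffun v => match v with inl a => f a | inr b => g b end].

Lemma proper_glue (g : {ffun 'I_k -> 'I_n}) (f : {ffun 'I_j -> 'I_n}) : injectiveb g ->
  proper_coloring (biclique_rel B) (glue g f) = okc B g f.
Proof.
move=> /injectiveP gi; apply/idP/idP.
- move=> /forallP H; apply/andP; split.
    apply/injectiveP => a a' E; apply/eqP; apply/negPn/negP => ne.
    by move/forallP: (H (inl a)) => /(_ (inl a')); rewrite /= ne !ffunE E eqxx.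
  apply/forallP => a; apply/forallP => b; apply/implyP => Bab.
  by move/forallP: (H (inl a)) => /(_ (inr b)); rewrite /= Bab !ffunE.
- case/andP => /injectiveP fi /forallP fo.
  apply/forallP => -[a|b]; apply/forallP => -[a'|b']; rewrite /= !ffunE; apply/implyP.
  + by apply: contra => /eqP /fi ->.
  + by move=> Bab; move/forallP: (fo a) => /(_ b') /implyP; apply.
  + by move=> Bab; rewrite eq_sym; move/forallP: (fo a') => /(_ b) /implyP; apply.
  + by apply: contra => /eqP /gi ->.
Qed.

Lemma col_nat : num_colorings (biclique_rel B) n =
  (\sum_(g : {ffun 'I_k -> 'I_n} | injectiveb g) cntc B g)%N.
Proof.
rewrite /num_colorings -sum1dep_card.
rewrite (partition_big (fun F : {ffun ('I_j + 'I_k) -> 'I_n} => [ffun b => F (inr b)]) predT) //=.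
rewrite (bigID (fun g : {ffun 'I_k -> 'I_n} => injectiveb g)) /=.
rewrite [X in (_ + X)%N]big1 ?addn0.
  apply: eq_bigr => g gi; rewrite sum1dep_card /cntc.
  have glue_inj : injective (glue g).
    by move=> f f' E; apply/ffunP => a; have := congr1 (fun F : {ffun ('I_j + 'I_k) -> 'I_n} => F (inl a)) E; rewrite !ffunE.
  set D := [set f | okc B g f].
  suff E : [set x | proper_coloring (biclique_rel B) x && ([ffun b => x (inr b)] == g)] = glue g @: D.
    by rewrite E card_imset.
  apply/setP => F; rewrite inE.
  apply/idP/imsetP.
  - case/andP => pF /eqP rF.
    have EF : F = glue g [ffun a => F (inl a)].
      by apply/ffunP => -[a|b]; rewrite !ffunE // -rF ffunE.
    exists [ffun a => F (inl a)]; last exact: EF.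
    by rewrite inE -proper_glue // -EF.
  - case=> f; rewrite inE => fok ->; rewrite proper_glue // fok /=.
    by apply/eqP/ffunP => b; rewrite !ffunE.
move=> g gn; apply: big_pred0 => F; apply/negP => /andP [pF /eqP rF].
move/negP: gn; apply; apply/injectiveP => b b' E; apply/eqP; apply/negPn/negP => ne.
move: E; rewrite -rF !ffunE => E.
by move/forallP: pF => /(_ (inr b)) /forallP /(_ (inr b')); rewrite /= ne E eqxx.
Qed.
End Col.

End P5.
Import P5.

Module P6.
Import GRing.Theory Num.Theory.
Local Open Scope ring_scope.

Lemma allRR n (J : finType) : (#|J| <= n)%N ->
  forall (K : finType) N (B : J -> K -> bool),
  (#|[set x : J * K | B x.1 x.2]| <= N)%N -> RR B.
Proof.
elim: n J => [|n IHn] J hJ K N; elim: N => [|N IHN] B hB;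
  apply: step_RR => [J' K' B' hJ'|B' hB'].
- by move: (leq_trans hJ' hJ).
- by move: (leq_trans hB' hB).
- by move: (leq_trans hJ' hJ).
- by apply: IHN; rewrite -ltnS (leq_trans hB' hB).
- by apply: (IHn J' _ K' _ B' (leqnn _)); rewrite -ltnS (leq_trans hJ' hJ).
- by move: (leq_trans hB' hB).
- by apply: (IHn J' _ K' _ B' (leqnn _)); rewrite -ltnS (leq_trans hJ' hJ).
- by apply: IHN; rewrite -ltnS (leq_trans hB' hB).
Qed.

Lemma arith (j k : nat) (m : rat) : (1 <= j)%N ->
  j%:R - k%:R - 1 - (m - k%:R) = - m + (j + k - 1)%N%:R - k%:R.
Proof.
move=> hj; rewrite natrB; last by rewrite (leq_trans hj) // leq_addr.
rewrite natrD.
rewrite opprB [in LHS]addrAC subrKA.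
by rewrite (addrC (- m)) (addrAC _ (- m)) [RHS]addrAC (addrAC j%:R k%:R) addrK.
Qed.

Lemma PG_form (j k : nat) (B : 'I_j -> 'I_k -> bool) (PG p : {poly rat}) :
  is_chromatic_poly (biclique_rel B) PG -> reps B p ->
  PG = falling_poly k * (p \Po ('X - (k%:R)%:P)).
Proof.
move=> HG Hp; apply: poly_eq_nat => m.
rewrite HG col_nat natr_sum.
rewrite (eq_bigr (fun _ => p.[(m - k)%N%:R])); last first.
  by move=> g /injectiveP gi; rewrite (Hp _ _ gi) !card_ord.
rewrite (eq_bigl (fun g => g \in [set g : {ffun 'I_k -> 'I_m} | injectiveb g])); last first.
  by move=> g; rewrite inE.
rewrite sumr_const card_inj_ffuns !card_ord.
rewrite hornerM horner_comp hornerD hornerN hornerX hornerC.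
rewrite /falling_poly horner_prod.
rewrite (eq_bigr (fun i : 'I_k => m%:R - i%:R)); last first.
  by move=> i _; rewrite hornerD hornerN hornerX hornerC.
rewrite prod_ffact.
case: (leqP k m) => [le|gt]; first by rewrite natrB // mulr_natl.
by rewrite (ffact_small gt) mulr0n mul0r.
Qed.


End P6.
Import P6.

Import GRing.Theory.
Local Open Scope ring_scope.

Theorem mainTheorem5 (j k : nat) (hj : (1 <= j)%N) (hjk : (j <= k)%N)
  (B : 'I_j -> 'I_k -> bool) (PG PH : {poly rat}) :
  is_chromatic_poly (biclique_rel B) PG ->
  is_chromatic_poly (biclique_rel (compl_bridges B)) PH ->
  interesting_factor k PG =
    (-1) ^+ j *: (interesting_factor k PH \Po (- 'X + ((j + k - 1)%N%:R)%:P)).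
Proof.
move=> HG HH.
have [[p Hp] cl] := allRR (leqnn #|'I_j|) (leqnn #|[set x : 'I_j * 'I_k | B x.1 x.2]|).
have [[q Hq] _] := allRR (leqnn #|'I_j|)
   (leqnn #|[set x : 'I_j * 'I_k | compl_bridges B x.1 x.2]|).
have fnz : falling_poly k != 0.
  by apply: monic_neq0; apply: monic_prod_XsubC.
rewrite /interesting_factor (PG_form HG Hp) (PG_form HH Hq) !mulKp //.
apply: poly_eq_nat => m.
rewrite hornerZ !horner_comp !hornerD hornerN !hornerX !hornerC.
rewrite (cl p q Hp Hq) !card_ord !hornerN !hornerX !hornerC -arith //.
Qed.
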